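(* Let $L=Rd$ with $R,d$ positive integers, and let $\Phi,\Psi$ be two unitary $L\times L$ matrices, partitioned into consecutive column-blocks $\Phi[\ell],\Psi[\ell]$ of size $L\times d$, $1\le \ell\le R$. Let ${\bf x}\in\mathbb{C}^L$, ${\bf x}\neq {\bf 0}$, satisfy $${\bf x}=\sum_{\ell=1}^R \Phi[\ell]{\bf a}[\ell]=\sum_{\ell=1}^R \Psi[\ell]{\bf b}[\ell]$$ with ${\bf a}[\ell],{\bf b}[\ell]\in\mathbb{C}^d$, and let $A=\|{\bf a}\|_{2,0}$, $B=\|{\bf b}\|_{2,0}$. Then $$\frac{1}{2}(A+B)\ge \sqrt{AB}\ge \frac{1}{d\,\mu_{\mathrm B}(\Phi,\Psi)},\qquad\text{where }\ \mu_{\mathrm B}(\Phi,\Psi)=\max_{\ell,r}\frac{1}{d}\rho(\Phi^H[\ell]\Psi[r]).$$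
   Context: For a matrix ${\bf M}$, $\rho({\bf M})=\lambda_{\max}^{1/2}({\bf M}^H{\bf M})$ denotes its spectral norm. For a vector ${\bf a}\in\mathbb{C}^{L}$ viewed as a concatenation of consecutive length-$d$ blocks ${\bf a}[1],\dots,{\bf a}[R]$, $\|{\bf a}\|_{2,0}$ denotes the number of indices $\ell$ with $\|{\bf a}[\ell]\|_2>0$. *)

(* Defs.v *)
From HB Require Import structures.
From mathcomp Require Import all_boot all_order all_algebra.
From mathcomp Require Import spectral.
From mathcomp Require Import complex.
From mathcomp Require Import classical_sets reals.
Set Implicit Arguments. Unset Strict Implicit. Unset Printing Implicit Defensive.
Import Order.TTheory GRing.Theory Num.Theory.
Local Open Scope ring_scope.
Local Open Scope sesquilinear_scope.
Local Open Scope complex_scope.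

Definition lambda_max (F : realType) (n : nat) (N : 'M[F[i]]_n) : F :=
  sup [set r : F | eigenvalue N (r%:C)].

Definition specnorm (F : realType) (m n : nat) (M : 'M[F[i]]_(m, n)) : F :=
  Num.sqrt (lambda_max (M ^t* *m M)).

(* l-th column block (size L x d) of an L x (R*d) matrix, 0-indexed: columns l*d .. l*d+d-1 *)
Definition colblk (C : Type) (L R d : nat) (M : 'M[C]_(L, R * d)) (l : 'I_R)
  : 'M[C]_(L, d) := \matrix_(i, j) M i (mxvec_index l j).

Definition vblk (C : Type) (R d : nat) (a : 'cV[C]_(R * d)) (l : 'I_R) : 'cV[C]_d :=
  \col_j a (mxvec_index l j) 0.

Definition l2norm (C : numClosedFieldType) (d : nat) (v : 'cV[C]_d) : C :=
  sqrtC (\sum_j `|v j 0| ^+ 2).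

Definition norm20 (C : numClosedFieldType) (R d : nat) (a : 'cV[C]_(R * d)) : nat :=
  #|[set l : 'I_R | 0 < l2norm (vblk a l)]|.

Definition muB (F : realType) (R d : nat) (Phi Psi : 'M[F[i]]_(R * d)) : F :=
  \big[Num.max/0]_(l < R) \big[Num.max/0]_(r < R)
     (specnorm ((colblk Phi l) ^t* *m colblk Psi r) / d%:R).

(* Main.v *)
Require Import Defs.
From HB Require Import structures.
From mathcomp Require Import all_boot all_order all_algebra.
From mathcomp Require Import spectral.
From mathcomp Require Import complex.
From mathcomp Require Import classical_sets reals.
From mathcomp Require Import lra.
Import Order.TTheory GRing.Theory Num.Theory.
Local Open Scope ring_scope.
Local Open Scope sesquilinear_scope.
Set Implicit Arguments. Unset Strict Implicit. Unset Printing Implicit Defensive.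

Section Gen.
Variable C : numClosedFieldType.

Definition cdot n (u v : 'cV[C]_n) : C := \sum_i (u i 0)^* * v i 0.

Lemma cdotE n (u v : 'cV[C]_n) : cdot u v = (u ^t* *m v) 0 0.
Proof. by rewrite /cdot mxE; apply: eq_bigr => i _; rewrite !mxE. Qed.

Lemma cdot_adj m n (M : 'M[C]_(m, n)) u v :
  cdot u (M *m v) = cdot (M ^t* *m u) v.
Proof. by rewrite !cdotE trmx_mul map_mxM trmxCK mulmxA. Qed.

Lemma cdot_adj' m n (M : 'M[C]_(m, n)) u v :
  cdot (M *m u) v = cdot u (M ^t* *m v).
Proof. by rewrite cdot_adj trmxCK. Qed.

Lemma cdot_ge0 n (u : 'cV[C]_n) : 0 <= cdot u u.
Proof. by apply: sumr_ge0 => i _; rewrite mulrC mul_conjC_ge0. Qed.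

Lemma cdot_sumr n I (r : seq I) (P : pred I) (u : 'cV[C]_n) f :
  cdot u (\sum_(i <- r | P i) f i) = \sum_(i <- r | P i) cdot u (f i).
Proof.
rewrite /cdot exchange_big /=; apply: eq_bigr => k _.
by rewrite summxE mulr_sumr.
Qed.

Lemma cdot_suml n I (r : seq I) (P : pred I) (v : 'cV[C]_n) f :
  cdot (\sum_(i <- r | P i) f i) v = \sum_(i <- r | P i) cdot (f i) v.
Proof.
rewrite /cdot exchange_big /=; apply: eq_bigr => k _.
by rewrite summxE rmorph_sum mulr_suml.
Qed.

Lemma cdot_dotmx n (u v : 'cV[C]_n) : cdot u v = dotmx (v ^T) (u ^T).
Proof.
rewrite dotmxE /cdot mxE; apply: eq_bigr => i _; rewrite !mxE mulrC.
by [].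
Qed.

Lemma cdot_CS n (u v : 'cV[C]_n) :
  `|cdot u v| <= sqrtC (cdot u u) * sqrtC (cdot v v).
Proof.
rewrite !cdot_dotmx mulrC.
exact: (CauchySchwarz_sqrt (@dotmx C n) (v ^T) (u ^T)).1.
Qed.

Lemma cdot_eq0 n (u : 'cV[C]_n) : cdot u u = 0 -> u = 0.
Proof.
move=> h; apply/matrixP => i j; rewrite ord1 mxE.
have : \sum_i (u i 0)^* * u i 0 = 0 by [].
move/eqP; rewrite psumr_eq0; last by move=> k _; rewrite mulrC mul_conjC_ge0.
move/allP/(_ i (mem_index_enum i)) => /implyP /(_ isT).
by rewrite mulrC mul_conjC_eq0 => /eqP.
Qed.

End Gen.

Section Ray.
Variable F : realType.
Local Notation C := (F[i]).

Lemma cdot_delta n (A : 'M[C]_n) j :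
  cdot (delta_mx j 0) (A *m delta_mx j 0) = A j j.
Proof.
rewrite /cdot (bigD1 j) //= big1 => [|i /negPf ij].
  rewrite !mxE eqxx /= conjC1 mul1r addr0 (bigD1 j) //= big1 => [|k /negPf kj].
    by rewrite !mxE eqxx mulr1 addr0.
  by rewrite !mxE kj mulr0.
by rewrite !mxE ij conjC0 mul0r.
Qed.

Lemma rayleigh m n (M : 'M[C]_(m, n)) (v : 'cV[C]_n) :
  cdot (M *m v) (M *m v) <= ((specnorm M) ^+ 2)%:C%C * cdot v v.
Proof.
set N := M ^t* *m M.
have NH : N ^t* = N by rewrite /N trmx_mul map_mxM trmxCK.
have Nn : N \is normalmx by apply/normalmxP; rewrite NH.
set P := spectralmx N; set D := spectral_diag N.
have hN : N = P ^t* *m diag_mx D *m P.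
  by rewrite -invmx_unitary ?spectral_unitarymx //; apply/orthomx_spectralP.
have PU : P \is unitarymx by apply: spectral_unitarymx.
have PP : P *m P ^t* = 1%:M by apply/unitarymxP.
have PP' : P ^t* *m P = 1%:M by apply: mulmx1C.
have hD : diag_mx D = P *m N *m P ^t*.
  by rewrite hN !mulmxA PP mul1mx -mulmxA PP mulmx1.
have Dge0 j : 0 <= D 0 j.
  have -> : D 0 j = diag_mx D j j by rewrite mxE eqxx mulr1n.
  rewrite hD -cdot_delta -!mulmxA cdot_adj cdot_adj trmxCK.
  exact: cdot_ge0.
have DR j : ((complex.Re (D 0 j))%:C)%C = D 0 j by rewrite RRe_real // ger0_real.
have eigD r : eigenvalue N r%:C%C -> exists k, D 0 k = r%:C%C.
  move=> /eigenvalueP [y hv v0].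
  set w := y *m P ^t*.
  have hw : w *m diag_mx D = r%:C%C *: w.
    by rewrite /w hD !mulmxA -(mulmxA y) PP' mulmx1 -(mulmxA y (M ^t*)) -/N hv -scalemxAl.
  have w0 : w != 0.
    apply: contraNneq v0 => w0.
    by rewrite -[y]mulmx1 -PP' mulmxA -/w w0 mul0mx.
  have [k wk] : exists k, w 0 k != 0.
    apply/existsP; apply: contraNT w0; rewrite negb_exists => /forallP h.
    apply/eqP/matrixP => i j; rewrite ord1 [RHS]mxE; apply/eqP/negPn; exact: h.
  exists k; move: hw; rewrite mul_mx_diag => /matrixP /(_ 0 k).
  rewrite [LHS]mxE [RHS]mxE [LHS]mulrC.
  exact: (mulIf wk).
set S := [set r : F | eigenvalue N r%:C%C]%classic.
have Sub : has_ubound S.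
  exists (\sum_j `|complex.Re (D 0 j)|) => r /eigD [k hk].
  have -> : r = complex.Re (D 0 k) by rewrite hk.
  apply: le_trans (ler_norm _) _.
  by rewrite (bigD1 k) //= lerDl sumr_ge0.
have DS j : S (complex.Re (D 0 j)).
  rewrite /S /= DR; apply/eigenvalueP; exists (row j P).
    have PN : P *m N = diag_mx D *m P by rewrite hD -(mulmxA (P *m N)) PP' mulmx1.
    by rewrite -row_mul PN mul_diag_mx; apply/rowP => k; rewrite !mxE.
  apply/eqP => r0.
  have := (row_unitarymxP PU) j j; rewrite r0 dotmxE mul0mx mxE eqxx => /eqP.
  by rewrite eq_sym oner_eq0.
have Dle j : D 0 j <= (lambda_max N)%:C%C.
  by rewrite -DR lecR; exact: (ub_le_sup Sub (DS j)).
set w := P *m v.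
have E1 : cdot (M *m v) (M *m v) = \sum_i D 0 i * ((w i 0)^* * w i 0).
  rewrite cdot_adj' mulmxA -/N hN -!mulmxA cdot_adj trmxCK /cdot.
  by apply: eq_bigr => i _; rewrite -/w mul_diag_mx [X in _ * X]mxE mulrCA.
have E2 : cdot w w = cdot v v by rewrite /w cdot_adj' mulmxA PP' mul1mx.
rewrite E1; apply: (@le_trans _ _ ((lambda_max N)%:C%C * cdot v v)).
  rewrite -E2 /cdot mulr_sumr; apply: ler_sum => i _.
  by apply: ler_wpM2r => //; rewrite mulrC mul_conjC_ge0.
apply: ler_wpM2r; first exact: cdot_ge0.
rewrite lecR /specnorm.
have [l0|l0] := leP 0 (lambda_max N); first by rewrite sqr_sqrtr.
by rewrite ltr0_sqrtr // expr0n /= ltW.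
Qed.
End Ray.

Section Blk.
Variable C : numClosedFieldType.

Lemma mxvec_index_inj m n (i k : 'I_m) (j l : 'I_n) :
  (mxvec_index i j == mxvec_index k l) = (i == k) && (j == l).
Proof.
apply/eqP/andP => [h|[/eqP-> /eqP->] //].
have /cast_ord_inj/enum_rank_inj [-> ->] := h.
by split.
Qed.

Lemma blk_orth R d (Phi : 'M[C]_(R * d)) l k :
  Phi \is unitarymx ->
  (colblk Phi l) ^t* *m colblk Phi k = if l == k then 1%:M else 0.
Proof.
move=> /unitarymxP /mulmx1C PP.
apply/matrixP => i j.
have := congr1 (fun X : 'M[C]_(R * d) => X (mxvec_index l i) (mxvec_index k j)) PP.
rewrite !mxE mxvec_index_inj => h.
have -> : (if l == k then 1%:M else 0 : 'M[C]_d) i j = ((l == k) && (i == j))%:R.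
  by case: (l == k); rewrite !mxE.
rewrite -h; apply: eq_bigr => m _; by rewrite /colblk !mxE.
Qed.

Lemma cdot_blk R d (Phi : 'M[C]_(R * d)) l k u v :
  Phi \is unitarymx ->
  cdot (colblk Phi l *m u) (colblk Phi k *m v) = (l == k)%:R * cdot u v.
Proof.
move=> PU; rewrite cdot_adj' mulmxA blk_orth //.
by case: eqP => _; rewrite ?mul1mx ?mul1r // mul0mx mul0r /cdot big1 // => i _; rewrite mxE mulr0.
Qed.

Lemma expand R d (Phi Psi : 'M[C]_(R * d)) (x a b : 'cV[C]_(R * d)) :
  x = \sum_(l < R) colblk Phi l *m vblk a l ->
  x = \sum_(l < R) colblk Psi l *m vblk b l ->
  cdot x x = \sum_l \sum_r cdot (vblk a l) ((colblk Phi l) ^t* *m colblk Psi r *m vblk b r).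
Proof.
move=> ha hb.
have -> : cdot x x = cdot (\sum_(l < R) colblk Phi l *m vblk a l)
                          (\sum_(l < R) colblk Psi l *m vblk b l) by rewrite -ha -hb.
rewrite cdot_suml; apply: eq_bigr => l _; rewrite cdot_sumr; apply: eq_bigr => r _.
by rewrite cdot_adj' mulmxA.
Qed.

Lemma normx R d (Phi : 'M[C]_(R * d)) (x a : 'cV[C]_(R * d)) :
  Phi \is unitarymx ->
  x = \sum_(l < R) colblk Phi l *m vblk a l ->
  cdot x x = \sum_l cdot (vblk a l) (vblk a l).
Proof.
move=> PU ha; rewrite (expand ha ha); apply: eq_bigr => l _.
rewrite (bigD1 l) //= big1 => [|k /negPf kl].
  by rewrite blk_orth // eqxx mul1mx addr0.
by rewrite blk_orth // eq_sym kl mul0mx /cdot big1 // => i _; rewrite [X in _ * X]mxE mulr0.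
Qed.

Lemma l2normE d (v : 'cV[C]_d) : l2norm v = sqrtC (cdot v v).
Proof. by rewrite /l2norm /cdot; congr sqrtC; apply: eq_bigr => j _; rewrite normCK mulrC. Qed.

End Blk.

Section Main.
Variable F : realType.
Local Notation C := (F[i]).

Lemma sqrtC_R (x : F) : 0 <= x -> sqrtC (x%:C%C) = (Num.sqrt x)%:C%C.
Proof.
move=> x0; rewrite -[in LHS](sqr_sqrtr x0) rmorphXn /= sqrCK //.
by rewrite lecR sqrtr_ge0.
Qed.

Lemma sqrtC_nat (n : nat) : sqrtC (n%:R : C) = (Num.sqrt (n%:R : F))%:C%C.
Proof. by rewrite -sqrtC_R ?ler0n // rmorph_nat. Qed.

Lemma amgm (A B : nat) :
  Num.sqrt ((A * B)%:R : F) <= (A + B)%:R / 2.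
Proof.
rewrite natrM natrD sqrtrM ?ler0n //.
have hA := sqr_sqrtr (ler0n F A); have hB := sqr_sqrtr (ler0n F B).
set a := Num.sqrt _ in hA *; set b := Num.sqrt _ in hB *.
rewrite -hA -hB; have := sqr_ge0 (a - b); nra.
Qed.

Lemma rho_le (R d : nat) (hd : (0 < d)%N) (Phi Psi : 'M[C]_(R * d)) l r :
  specnorm ((colblk Phi l) ^t* *m colblk Psi r) <= d%:R * muB Phi Psi.
Proof.
have d0 : (0 : F) < d%:R by rewrite ltr0n.
rewrite -ler_pdivrMl //= mulrC.
apply: le_trans (le_bigmax _ _ l).
exact: (le_bigmax _ (fun r => specnorm ((colblk Phi l) ^t* *m colblk Psi r) / d%:R) r).
Qed.

Lemma sqrt_rayleigh m n (M : 'M[C]_(m, n)) (v : 'cV[C]_n) :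
  sqrtC (cdot (M *m v) (M *m v)) <= (specnorm M)%:C%C * sqrtC (cdot v v).
Proof.
have s0 : 0 <= (specnorm M)%:C%C by rewrite lecR sqrtr_ge0.
rewrite -[X in X * _](sqrCK s0) -sqrtCM ?nnegrE ?exprn_ge0 ?cdot_ge0 //.
rewrite ler_sqrtC ?nnegrE ?mulr_ge0 ?exprn_ge0 ?cdot_ge0 //.
by rewrite -rmorphXn; exact: rayleigh.
Qed.

Lemma sum_al R d (a : 'cV[C]_(R * d)) :
  \sum_l sqrtC (cdot (vblk a l) (vblk a l)) <=
  (Num.sqrt ((norm20 a)%:R : F))%:C%C * sqrtC (\sum_l cdot (vblk a l) (vblk a l)).
Proof.
rewrite -sqrtC_nat.
set al := fun l => sqrtC (cdot (vblk a l) (vblk a l)).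
have al0 l : 0 <= al l by rewrite sqrtC_ge0 cdot_ge0.
set Sa := [set l | 0 < l2norm (vblk a l)].
set u := \row_l al l; set v := \row_l ((l \in Sa)%:R : C).
have h1 : dotmx u v = \sum_l al l.
  rewrite dotmxE mxE; apply: eq_bigr => l _; rewrite !mxE inE l2normE -/(al l).
  have [lt|nlt] := boolP (0 < al l); first by rewrite conjC1 mulr1.
  move: (al0 l); rewrite le_eqVlt (negPf nlt) orbF => /eqP <-.
  by rewrite mul0r.
have h2 : dotmx v v = (norm20 a)%:R.
  rewrite dotmxE mxE.
  transitivity (\sum_(l in Sa) (1 : C)); last by rewrite sumr_const.
  rewrite [RHS]big_mkcond; apply: eq_bigr => l _; rewrite !mxE.
  by case: (l \in Sa); rewrite ?conjC1 ?conjC0 ?mulr1 ?mulr0.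
have h3 : dotmx u u = \sum_l cdot (vblk a l) (vblk a l).
  rewrite dotmxE mxE; apply: eq_bigr => l _; rewrite !mxE.
  by rewrite conj_Creal ?ger0_real // -expr2 sqrtCK.
have sge0 : 0 <= \sum_l al l by apply: sumr_ge0.
rewrite -(ger0_norm sge0) -h1 -h2 -h3 mulrC.
exact: (CauchySchwarz_sqrt (@dotmx C R) u v).1.
Qed.

End Main.

Unset Implicit Arguments.

Theorem theorem1 (F : realType) (R d : nat) (hR : (0 < R)%N) (hd : (0 < d)%N)
  (Phi Psi : 'M[F[i]]_(R * d)) (x a b : 'cV[F[i]]_(R * d)) :
  Phi \is unitarymx -> Psi \is unitarymx ->
  x != 0 ->
  x = \sum_(l < R) colblk Phi l *m vblk a l ->
  x = \sum_(l < R) colblk Psi l *m vblk b l ->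
  let A := norm20 a in let B := norm20 b in
  Num.sqrt ((A * B)%:R : F) <= (A + B)%:R / 2 /\
  1 / (d%:R * muB Phi Psi) <= Num.sqrt ((A * B)%:R : F).
Proof.
move=> PhiU PsiU x0 ha hb A B.
split; first exact: amgm.
set X := cdot x x.
have Xgt0 : 0 < X.
  rewrite lt_def cdot_ge0 andbT; apply: contraNneq x0 => /cdot_eq0 ->.
  by [].
set mu := muB Phi Psi.
set c := (d%:R * mu)%:C%C.
have mu0 : 0 <= d%:R * mu.
  exact: le_trans (sqrtr_ge0 _) (rho_le hd Phi Psi (Ordinal hR) (Ordinal hR)).
have c0 : 0 <= c by rewrite lecR.
set al := fun l => sqrtC (cdot (vblk a l) (vblk a l)).
set be := fun l => sqrtC (cdot (vblk b l) (vblk b l)).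
have step1 : X <= c * ((\sum_l al l) * (\sum_r be r)).
  rewrite -(ger0_norm (ltW Xgt0)) /X (expand ha hb).
  apply: le_trans (ler_norm_sum _ _ _) _.
  rewrite mulr_suml mulr_sumr; apply: ler_sum => l _.
  rewrite mulr_sumr mulr_sumr; apply: le_trans (ler_norm_sum _ _ _) _.
  apply: ler_sum => r _.
  apply: le_trans (cdot_CS _ _) _.
  rewrite mulrCA; apply: ler_wpM2l; first by rewrite sqrtC_ge0 cdot_ge0.
  apply: le_trans (sqrt_rayleigh _ _) _.
  apply: ler_wpM2r; first by rewrite sqrtC_ge0 cdot_ge0.
  by rewrite lecR rho_le.
have sa := sum_al a; have sb := sum_al b.
rewrite -(normx PhiU ha) -/X in sa.
rewrite -(normx PsiU hb) -/X in sb.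
have step2 : X <= (c * (Num.sqrt (A%:R : F))%:C%C * (Num.sqrt (B%:R : F))%:C%C) * X.
  apply: le_trans step1 _.
  have -> : c * (Num.sqrt (A%:R : F))%:C%C * (Num.sqrt (B%:R : F))%:C%C * X =
            c * (((Num.sqrt (A%:R : F))%:C%C * sqrtC X) * ((Num.sqrt (B%:R : F))%:C%C * sqrtC X)).
    have eX : X = sqrtC X * sqrtC X by rewrite -expr2 sqrtCK.
    have gen (c1 p q w : F[i]) : c1 * p * q * (w * w) = c1 * ((p * w) * (q * w)).
      by rewrite -!mulrA; congr (_ * (_ * _)); exact: mulrCA.
    by rewrite {1}eX; exact: gen.
  apply: (ler_wpM2l c0).
  have pa : 0 <= \sum_l al l by apply: sumr_ge0 => l _; rewrite sqrtC_ge0 cdot_ge0.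
  have pb : 0 <= \sum_l be l by apply: sumr_ge0 => l _; rewrite sqrtC_ge0 cdot_ge0.
  exact: (ler_pM pa pb sa sb).
move: step2; rewrite -{1}[X]mul1r ler_pM2r // /c => h0.
have key : (1 : F) <= d%:R * mu * Num.sqrt (A%:R) * Num.sqrt (B%:R).
  rewrite -lecR rmorph1; apply: le_trans h0 _; by rewrite !rmorphM.
clear h0; move: key; rewrite -mulrA -sqrtrM ?ler0n // -natrM.
set t := d%:R * mu; set s := Num.sqrt _ => h.
have s0 : 0 <= s by apply: sqrtr_ge0.
have t0 : 0 < t.
  rewrite lt_neqAle mu0 andbT; apply/negP => /eqP t0.
  by move: h; rewrite -t0 mul0r ler10.
by rewrite ler_pdivrMr // mulrC.
Qed.
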